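(* Let $\lambda>0$, $2<q<3$, let $\kappa$ be a constant with $2^{2-q}\le\kappa\le q2^{1-q}$, and let $h:\mathbb{R}\to[0,+\infty]$ be convex and $C^1$ on $(0,\infty)$ with $\lim_{t\to0^+}h(t)=+\infty$, $\liminf_{t\to\infty}h(t)/t>0$, $h(t)=+\infty$ for $t\le0$, and suppose $h'(\lambda^3)\ge0$. Define $\mathcal{F}_2(A)=(\kappa/2)|A-\lambda\mathbf{1}|^q+\lambda h'(\lambda^3)G(A)$. Then $\mathcal{F}_2(A)\ge0$ for all $A\in\mathbb{R}^{3\times3}$ provided $$\lambda h'(\lambda^3)\le\inf_{c_0>0}\left\{\frac{\kappa}{2}\max\left\{\frac{c_0^{q-2}}{M_2(\lambda,c_0)},\frac{c_0^{q-3}}{M_3(\lambda,c_0)}\right\}\right\}.$$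
   Context: For $A\in\mathbb{R}^{3\times3}$ let $\lambda_1(A),\lambda_2(A),\lambda_3(A)$ be its singular values, $P(A)=\sum_{1\le i<j\le3}\lambda_i(A)\lambda_j(A)-\lambda\sum_i\lambda_i(A)$, $N(A)=\operatorname{tr}\operatorname{cof}A-\lambda\operatorname{tr}A$ (cof the cofactor matrix), and $G(A)=P(A)-N(A)$. $|\cdot|$ is the Frobenius norm and $\mathbf{1}$ the identity. For $c_0>0$: $M_2(\lambda,c_0)=\sup\{|G(A)|/|A-\lambda\mathbf{1}|^2:\ |A-\lambda\mathbf{1}|\ge c_0\}$ and $M_3(\lambda,c_0)=\sup\{|G(A)|/|A-\lambda\mathbf{1}|^3:\ 0<|A-\lambda\mathbf{1}|<c_0\}$. *)

(* Defs.v *)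
From HB Require Import structures.
From mathcomp Require Import all_boot all_order all_algebra.
From mathcomp Require Import all_classical all_reals all_analysis.
Set Implicit Arguments. Unset Strict Implicit. Unset Printing Implicit Defensive.
Import Order.TTheory GRing.Theory Num.Theory.
Import numFieldNormedType.Exports.
Local Open Scope classical_set_scope.
Local Open Scope ring_scope.

Section Defs.
Variable R : realType.

Definition fnorm (A : 'M[R]_3) : R :=
  Num.sqrt (\sum_(i < 3) \sum_(j < 3) A i j ^+ 2).

(* s is a vector of singular values of A: nonnegative, and their squares are
   the eigenvalues (with multiplicity) of A^T A, i.e. the roots of its
   characteristic polynomial. *)
Definition is_sing_vals (A : 'M[R]_3) (s : 'rV[R]_3) : Prop :=
  (forall i, 0 <= s 0 i) /\
  char_poly (A^T *m A) = \prod_(i < 3) ('X - (s 0 i ^+ 2)%:P).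

(* the singular values lambda_1(A), lambda_2(A), lambda_3(A) (in some order;
   everything below is symmetric in them) *)
Definition sing_vals (A : 'M[R]_3) : 'rV[R]_3 := xget 0 (is_sing_vals A).

Definition Pfun (lam : R) (A : 'M[R]_3) : R :=
  let s := sing_vals A in
  \sum_(i < 3) \sum_(j < 3 | (i < j)%N) s 0 i * s 0 j - lam * \sum_(i < 3) s 0 i.

Definition tr_cof (A : 'M[R]_3) : R := \sum_(i < 3) cofactor A i i.

Definition Nfun (lam : R) (A : 'M[R]_3) : R := tr_cof A - lam * \tr A.

Definition Gfun (lam : R) (A : 'M[R]_3) : R := Pfun lam A - Nfun lam A.

Local Open Scope ereal_scope.

Definition M2 (lam c0 : R) : \bar R :=
  ereal_sup [set ((`|Gfun lam A| / fnorm (A - lam%:M) ^+ 2)%R)%:E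
            | A in [set A : 'M[R]_3 | (c0 <= fnorm (A - lam%:M))%R]].

Definition M3 (lam c0 : R) : \bar R :=
  ereal_sup [set ((`|Gfun lam A| / fnorm (A - lam%:M) ^+ 3)%R)%:E
            | A in [set A : 'M[R]_3 | (0 < fnorm (A - lam%:M) < c0)%R]].

End Defs.

(* Main.v *)
Require Import Defs.
From HB Require Import structures.
From mathcomp Require Import all_boot all_order all_algebra.
From mathcomp Require Import all_classical all_reals all_analysis.
From mathcomp Require Import ring lra.
Set Implicit Arguments. Unset Strict Implicit. Unset Printing Implicit Defensive.
Import Order.TTheory GRing.Theory Num.Theory.
Import numFieldNormedType.Exports.
Local Open Scope classical_set_scope.
Local Open Scope ring_scope.

Definition ent {R : realType} {n} (A : 'M[R]_n.+1) (i j : nat) : R := A (inord i) (inord j).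
Lemma entE {R : realType} {n} (A : 'M[R]_n.+1) i j : A i j = ent A (val i) (val j).
Proof. by rewrite /ent !inord_val. Qed.

Lemma det2 {R : realType} (M : 'M[R]_2) :
  \det M = M ord0 ord0 * M ord_max ord_max - M ord0 ord_max * M ord_max ord0.
Proof.
rewrite (expand_det_row _ ord0) !big_ord_recr big_ord0 /cofactor !det_mx11 /=.
rewrite !mxE !entE /= /bump /=; ring.
Qed.

Lemma trcE {R : realType} (A : 'M[R]_3) : tr_cof A =
  ent A 1 1 * ent A 2 2 - ent A 1 2 * ent A 2 1
  + (ent A 0 0 * ent A 2 2 - ent A 0 2 * ent A 2 0)
  + (ent A 0 0 * ent A 1 1 - ent A 0 1 * ent A 1 0).
Proof.
rewrite /tr_cof !big_ord_recr big_ord0 /cofactor !det2 /= !mxE !entE /= /bump /=; ring.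
Qed.

Lemma trE {R : realType} (A : 'M[R]_3) : \tr A = ent A 0 0 + ent A 1 1 + ent A 2 2.
Proof. rewrite /mxtrace !big_ord_recr big_ord0 !entE /=; ring. Qed.

Lemma fnorm2 {R : realType} (A : 'M[R]_3) : fnorm A ^+ 2 =
  ent A 0 0 ^+ 2 + ent A 0 1 ^+ 2 + ent A 0 2 ^+ 2 +
  ent A 1 0 ^+ 2 + ent A 1 1 ^+ 2 + ent A 1 2 ^+ 2 +
  ent A 2 0 ^+ 2 + ent A 2 1 ^+ 2 + ent A 2 2 ^+ 2.
Proof.
rewrite /fnorm sqr_sqrtr; last by apply: sumr_ge0 => i _; apply: sumr_ge0 => j _; exact: sqr_ge0.
rewrite !big_ord_recr !big_ord0 !entE /=; ring.
Qed.

Lemma entB {R : realType} (A : 'M[R]_3) (l : R) i j : (i < 3)%N -> (j < 3)%N ->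
  ent (A - l%:M) i j = ent A i j - (if i == j then l else 0).
Proof.
move=> hi hj; rewrite /ent !mxE -val_eqE /= !inordK //.
by case: eqP.
Qed.

Lemma entS {R : realType} (l : R) i j : (i < 3)%N -> (j < 3)%N ->
  ent (l%:M : 'M[R]_3) i j = (if i == j then l else 0).
Proof.
move=> hi hj; rewrite /ent !mxE -val_eqE /= !inordK //.
by case: eqP.
Qed.

Definition sn {R : realType} (e : R) := 2 * e / (1 + e ^+ 2).
Definition cs {R : realType} (e : R) := (1 - e ^+ 2) / (1 + e ^+ 2).

Definition rotf {R : realType} (p : nat) (e : R) (i j : nat) : R :=
  match p with
  | 0 => match i, j with 0, 0 => cs e | 0, 1 => - sn e | 1, 0 => sn e | 1, 1 => cs e | 2, 2 => 1 | _, _ => 0 end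
  | 1 => match i, j with 0, 0 => cs e | 0, 2 => - sn e | 2, 0 => sn e | 2, 2 => cs e | 1, 1 => 1 | _, _ => 0 end
  | _ => match i, j with 0, 0 => 1 | 1, 1 => cs e | 1, 2 => - sn e | 2, 1 => sn e | 2, 2 => cs e | _, _ => 0 end
  end.

Definition Rot {R : realType} (p : nat) (e : R) : 'M[R]_3 :=
  \matrix_(i, j) rotf p e (val i) (val j).

Lemma entM {R : realType} (A B : 'M[R]_3) i j :
  ent (A *m B) i j = ent A i 0 * ent B 0 j + ent A i 1 * ent B 1 j + ent A i 2 * ent B 2 j.
Proof.
rewrite {1}/ent mxE.
rewrite (eq_bigr (fun k : 'I_3 => ent A i k * ent B k j)); last first.
  by move=> k _; rewrite /ent !inord_val.
by rewrite !big_ord_recr big_ord0 /= add0r.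
Qed.

Lemma entR {R : realType} p (e : R) i j : (i < 3)%N -> (j < 3)%N ->
  ent (Rot p e) i j = rotf p e i j.
Proof. by move=> hi hj; rewrite /ent mxE /= !inordK. Qed.

Lemma den_neq0 {R : realType} (e : R) : 1 + e ^+ 2 != 0.
Proof. by rewrite lt0r_neq0 // ltr_pwDl // sqr_ge0. Qed.

Definition ty1 {R : realType} p (A : 'M[R]_3) :=
  match p with 0 => ent A 0 1 - ent A 1 0 | 1 => ent A 0 2 - ent A 2 0
  | _ => ent A 1 2 - ent A 2 1 end.
Definition ty2 {R : realType} p (A : 'M[R]_3) :=
  match p with 0 => ent A 0 0 + ent A 1 1 | 1 => ent A 0 0 + ent A 2 2
  | _ => ent A 1 1 + ent A 2 2 end.
Definition tX {R : realType} p (A : 'M[R]_3) :=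
  match p with
  | 0 => (ent A 1 1 * ent A 2 2 - ent A 1 2 * ent A 2 1) + (ent A 0 0 * ent A 2 2 - ent A 0 2 * ent A 2 0)
  | 1 => (ent A 1 1 * ent A 2 2 - ent A 1 2 * ent A 2 1) + (ent A 0 0 * ent A 1 1 - ent A 0 1 * ent A 1 0)
  | _ => (ent A 0 0 * ent A 2 2 - ent A 0 2 * ent A 2 0) + (ent A 0 0 * ent A 1 1 - ent A 0 1 * ent A 1 0)
  end.
Definition tY {R : realType} p (A : 'M[R]_3) :=
  match p with
  | 0 => ent A 0 1 * ent A 2 2 - ent A 0 2 * ent A 2 1 - ent A 1 0 * ent A 2 2 + ent A 1 2 * ent A 2 0
  | 1 => (ent A 1 0 * ent A 2 1 - ent A 1 1 * ent A 2 0) - (ent A 0 1 * ent A 1 2 - ent A 0 2 * ent A 1 1)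
  | _ => - (ent A 0 0 * ent A 2 1 - ent A 0 1 * ent A 2 0) + (ent A 0 0 * ent A 1 2 - ent A 0 2 * ent A 1 0)
  end.

Ltac rotsimp := rewrite ?trcE ?trE ?fnorm2 ?entB // !entM !entR //= /rotf /=.

Lemma trc_rot {R : realType} p (e : R) (A : 'M[R]_3) : (p < 3)%N ->
  tr_cof (A *m Rot p e) = tr_cof A + tX p A * (cs e - 1) + tY p A * sn e.
Proof.
have h := den_neq0 e.
by case: p => [|[|[|//]]] _; rotsimp; rewrite /tX /tY /cs /sn; field.
Qed.

Lemma tr_rot {R : realType} p (e : R) (A : 'M[R]_3) : (p < 3)%N ->
  \tr (A *m Rot p e) = \tr A + ty2 p A * (cs e - 1) + ty1 p A * sn e.
Proof.
have h := den_neq0 e.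
by case: p => [|[|[|//]]] _; rotsimp; rewrite /ty1 /ty2 /cs /sn; field.
Qed.

Lemma fn_rot {R : realType} p (e l : R) (A : 'M[R]_3) : (p < 3)%N ->
  fnorm (A *m Rot p e - l%:M) ^+ 2 =
  fnorm (A - l%:M) ^+ 2 - 2 * l * (ty2 p A * (cs e - 1) + ty1 p A * sn e).
Proof.
have h := den_neq0 e.
by case: p => [|[|[|//]]] _; rewrite !fnorm2 !entB //= !entM !entR //= /rotf /=;
 rewrite /ty1 /ty2 /cs /sn; field.
Qed.

Lemma entT {R : realType} (A : 'M[R]_3) i j : ent A^T i j = ent A j i.
Proof. by rewrite /ent mxE. Qed.

Lemma rot_orth {R : realType} p (e : R) : (p < 3)%N -> (Rot p e)^T *m Rot p e = 1%:M.
Proof.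
have h := den_neq0 e.
move=> hp; apply/matrixP => i j; rewrite [LHS]entE [RHS]entE.
case: i => [[|[|[|//]]] ?]; case: j => [[|[|[|//]]] ?];
  rewrite /= entM !entT !entR // entS //=;
  move: hp; case: p => [|[|[|//]]] _ /=; rewrite /rotf /cs /sn /=; field.
all: by []. Qed.

Lemma char_poly_conj {R : realType} (M V : 'M[R]_3) : V^T *m V = 1%:M ->
  char_poly (V^T *m M *m V) = char_poly M.
Proof.
move=> hV.
have E : char_poly_mx (V^T *m M *m V) =
   map_mx polyC V^T *m char_poly_mx M *m map_mx polyC V.
  rewrite /char_poly_mx mulmxBr mulmxBl !map_mxM.
  have hV' : map_mx (@polyC R) V^T *m map_mx polyC V = 1%:M.
    by rewrite -map_mxM hV map_mx1.
  by rewrite mul_mx_scalar -scalemxAl hV' scalemx1.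
rewrite /char_poly E !det_mulmx mulrAC -det_mulmx -map_mxM hV map_mx1 det1.
by rewrite mul1r.
Qed.

Lemma is_sing_rot {R : realType} (A V : 'M[R]_3) : V^T *m V = 1%:M ->
  is_sing_vals (A *m V) = is_sing_vals A.
Proof.
move=> hV; apply/funext => s; apply/propext.
by rewrite /is_sing_vals trmx_mul mulmxA -(mulmxA _ _ A) char_poly_conj.
Qed.

Lemma sing_rot {R : realType} (A V : 'M[R]_3) : V^T *m V = 1%:M ->
  sing_vals (A *m V) = sing_vals A.
Proof. by move=> hV; rewrite /sing_vals is_sing_rot. Qed.

Lemma Pfun_rot {R : realType} (l : R) (A V : 'M[R]_3) : V^T *m V = 1%:M ->
  Defs.Pfun l (A *m V) = Defs.Pfun l A.
Proof. by move=> hV; rewrite /Defs.Pfun sing_rot. Qed.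

Definition rent {R : realType} (s : 'rV[R]_3) (i : nat) := s 0 (inord i).
Lemma rentE {R : realType} (s : 'rV[R]_3) (k : 'I_3) : s 0 k = rent s (val k).
Proof. by rewrite /rent inord_val. Qed.

Lemma PfunE {R : realType} (l : R) (A : 'M[R]_3) :
  Defs.Pfun l A = rent (sing_vals A) 0 * rent (sing_vals A) 1
     + rent (sing_vals A) 0 * rent (sing_vals A) 2 + rent (sing_vals A) 1 * rent (sing_vals A) 2
     - l * (rent (sing_vals A) 0 + rent (sing_vals A) 1 + rent (sing_vals A) 2).
Proof.
rewrite /Defs.Pfun /=.
under eq_bigr do rewrite big_mkcond.
rewrite !big_ord_recr !big_ord0 /= !rentE /=; ring.
Qed.

Lemma sing_scalar {R : realType} (mu : R) : 0 <= mu ->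
  forall k, sing_vals (mu%:M : 'M[R]_3) 0 k = mu.
Proof.
move=> hmu.
have cp : char_poly ((mu%:M : 'M[R]_3)^T *m mu%:M) = \prod_(i < 3) ('X - (mu ^+ 2)%:P).
  rewrite tr_scalar_mx -scalar_mxM char_poly_trig ?scalar_mx_is_trig //.
  by apply: eq_bigr => i _; rewrite mxE eqxx mulr1n expr2.
have ex : exists s, is_sing_vals (mu%:M : 'M[R]_3) s.
  exists (const_mx mu); split; first by move=> i; rewrite mxE.
  by rewrite cp; apply: eq_bigr => i _; rewrite mxE.
have [hs0 hs] := xgetPex 0 ex.
move=> k; rewrite /sing_vals.
have := congr1 (fun p => p.[(xget 0 (is_sing_vals (mu%:M : 'M[R]_3)) 0 k) ^+ 2]) hs.
rewrite cp /= !horner_prod [X in _ = X -> _](bigD1 k) //= !hornerXsubC subrr mul0r.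
rewrite prodr_const card_ord => /eqP; rewrite expf_eq0 /= subr_eq0 => /eqP h.
have := hs0 k; move: h; set x := xget 0 (is_sing_vals (mu%:M : 'M[R]_3)) 0 k => h hx.
nra.
Qed.

Lemma G_scalar {R : realType} (l mu : R) : 0 <= mu -> Gfun l (mu%:M : 'M[R]_3) = 0.
Proof.
move=> hmu; rewrite /Gfun PfunE /Nfun trcE trE /rent !sing_scalar // !entS //=; ring.
Qed.

Lemma pow_bound {R : realType} (r0 r q t : R) : 0 < r0 -> 0 <= r -> 0 < q -> q <= 4 ->
  r ^+ 2 <= r0 ^+ 2 * t -> 1 <= t -> r `^ q <= r0 `^ q * t ^+ 2.
Proof.
move=> h0 hr hq hq4 hrt ht.
have hP : 0 <= r0 `^ q := powR_ge0 _ _.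
have ht2 : 1 <= t ^+ 2 by nra.
case: (lerP r r0) => hrr.
  apply: (le_trans (ge0_ler_powR (ltW hq) _ _ hrr)); rewrite ?nnegrE ?(ltW h0) //.
  by rewrite ler_peMr.
set z := r / r0.
have hz : 1 <= z by rewrite /z ler_pdivlMr // mul1r ltW.
have rE : r = r0 * z by rewrite /z mulrCA divff ?mulr1 // gt_eqF.
rewrite rE powRM ?(ltW h0) ?(le_trans ler01 hz) //.
apply: ler_wpM2l => //.
apply: (le_trans (ler_powR hz hq4)).
rewrite powR_mulrn ?(le_trans ler01 hz) //.
have hz2 : z ^+ 2 <= t.
  have : r0 ^+ 2 * z ^+ 2 <= r0 ^+ 2 * t by rewrite -exprMn -rE.
  by rewrite ler_pM2l // exprn_gt0.
have -> : z ^+ 4 = (z ^+ 2) ^+ 2 by rewrite -exprM.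
by rewrite ler_pXn2r // ?nnegrE ?sqr_ge0 // (le_trans _ hz2) // sqr_ge0.
Qed.

Lemma sn_bound {R : realType} (e : R) : `|sn e| <= 2 * `|e|.
Proof.
have hden : 0 < 1 + e ^+ 2 by rewrite ltr_pwDl // sqr_ge0.
have E : `|sn e| * (1 + e ^+ 2) = 2 * `|e|.
  rewrite -[X in _ * X](ger0_norm (ltW hden)) -normrM /sn mulfVK ?gt_eqF //.
  by rewrite normrM ger0_norm.
have := normr_ge0 (sn e); have := sqr_ge0 e; nra.
Qed.

Lemma cs_eq {R : realType} (e : R) : cs e - 1 = - (2 * e ^+ 2 / (1 + e ^+ 2)).
Proof. by have h := den_neq0 e; rewrite /cs; field. Qed.

Lemma cs_bound {R : realType} (e : R) : `|e| <= 1 -> `|cs e - 1| <= 2 * `|e|.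
Proof.
move=> he.
have hden : 0 < 1 + e ^+ 2 by rewrite ltr_pwDl // sqr_ge0.
have E : `|cs e - 1| * (1 + e ^+ 2) = 2 * e ^+ 2.
  rewrite -[X in _ * X](ger0_norm (ltW hden)) -normrM cs_eq mulNr normrN mulfVK ?gt_eqF //.
  by rewrite ger0_norm // mulr_ge0 // sqr_ge0.
have h2 : e ^+ 2 = `|e| ^+ 2 by rewrite real_normK // num_real.
have := normr_ge0 (cs e - 1); have := sqr_ge0 e; have := normr_ge0 e; nra.
Qed.

Lemma sn_pos {R : realType} (u : R) : 0 < u -> 0 < sn u.
Proof. by move=> hu; rewrite /sn divr_gt0 ?mulr_gt0 // ltr_pwDl // sqr_ge0. Qed.

Lemma cs_neg {R : realType} (u : R) : 0 < u -> cs u - 1 < 0.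
Proof.
move=> hu; rewrite cs_eq oppr_lt0 divr_gt0 ?mulr_gt0 ?exprn_gt0 //.
by rewrite ltr_pwDl // sqr_ge0.
Qed.

Lemma snN {R : realType} (u : R) : sn (- u) = - sn u.
Proof. by rewrite /sn sqrrN mulrN mulNr. Qed.
Lemma csN {R : realType} (u : R) : cs (- u) = cs u.
Proof. by rewrite /cs sqrrN. Qed.

Lemma pert {R : realType} (k d l q r0 G0 x1 x2 y1 y2 : R) :
  0 < k -> 0 < d -> 0 < l -> 0 < q -> q <= 4 -> 0 < r0 ->
  k * r0 `^ q + d * G0 < 0 ->
  exists u, 0 < u /\ forall e, (e = u \/ e = - u) -> forall r, 0 <= r ->
    r ^+ 2 = r0 ^+ 2 - 2 * l * (y2 * (cs e - 1) + y1 * sn e) ->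
    k * r `^ q + d * (G0 - (x1 * (cs e - 1) + x2 * sn e)) < 0.
Proof.
move=> hk hd hl hq hq4 hr0 hbad.
set m := - (k * r0 `^ q + d * G0).
have hm : 0 < m by rewrite /m oppr_gt0.
set P0 := r0 `^ q.
have hP0 : 0 <= P0 := powR_ge0 _ _.
set a : R := `|x1| + `|x2|.
set b : R := `|y1| + `|y2|.
have ha : 0 <= a by rewrite addr_ge0.
have hb : 0 <= b by rewrite addr_ge0.
have hr02 : 0 < r0 ^+ 2 by rewrite exprn_gt0.
set be := 4 * l * b / r0 ^+ 2.
have hbe : 0 <= be by rewrite /be divr_ge0 ?mulr_ge0 // ?ltW.
set K := k * P0 * (2 * be + be ^+ 2) + 2 * d * a.
have hK : 0 <= K.
  have hkp : 0 <= k * P0 by apply: mulr_ge0 => //; exact: ltW.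
  apply: addr_ge0; apply: mulr_ge0 => //.
  - by apply: addr_ge0; [apply: mulr_ge0 | exact: sqr_ge0].
  - by apply: mulr_ge0 => //; exact: ltW.
set u := m / (2 * (K + 1) + m).
have hden : 0 < 2 * (K + 1) + m by lra.
have hu : 0 < u by rewrite /u divr_gt0.
have hu1 : u <= 1 by rewrite /u ler_pdivrMr // mul1r; lra.
have huK : u * K < m.
  have hum : u * (2 * (K + 1) + m) = m by rewrite /u mulfVK ?gt_eqF.
  nra.
exists u; split => // e he r hr hr2.
have heu : `|e| = u by case: he => ->; rewrite ?normrN gtr0_norm.
have he1 : `|e| <= 1 by rewrite heu.
have hS := sn_bound e; have hC := cs_bound he1; rewrite heu in hS hC.
set S := sn e in hS hr2 *; set C := cs e - 1 in hC hr2 *.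
have hdx : `|x1 * C + x2 * S| <= 2 * u * a.
  rewrite (le_trans (ler_normD _ _)) // (normrM x1 C) (normrM x2 S) /a.
  have h1 := ler_wpM2l (normr_ge0 x1) hC; have h2 := ler_wpM2l (normr_ge0 x2) hS; lra.
have hdy : `|y2 * C + y1 * S| <= 2 * u * b.
  rewrite (le_trans (ler_normD _ _)) // (normrM y2 C) (normrM y1 S) /b.
  have h1 := ler_wpM2l (normr_ge0 y2) hC; have h2 := ler_wpM2l (normr_ge0 y1) hS; lra.
have hrr : r ^+ 2 <= r0 ^+ 2 * (1 + be * u).
  have Ebe : r0 ^+ 2 * (1 + be * u) = r0 ^+ 2 + 4 * l * b * u.
    by rewrite /be; field; rewrite gt_eqF.
  rewrite hr2 Ebe.
  have : - (y2 * C + y1 * S) <= 2 * u * b by rewrite (le_trans (ler_norm _)) // normrN.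
  move/(ler_wpM2l (ltW hl)); lra.
have hpow := pow_bound hr0 hr hq hq4 hrr (ler_wpDr (mulr_ge0 hbe (ltW hu)) (lexx 1)).
have E : k * r `^ q + d * (G0 - (x1 * C + x2 * S)) <=
   - m + k * P0 * ((1 + be * u) ^+ 2 - 1) + d * (2 * u * a).
  have : - (x1 * C + x2 * S) <= 2 * u * a by rewrite (le_trans (ler_norm _)) // normrN.
  rewrite /m /P0 in hpow *.
  have := ltW hk; have := ltW hd; nra.
apply: (le_lt_trans E).
have : k * P0 * ((1 + be * u) ^+ 2 - 1) + d * (2 * u * a) <= u * K.
  rewrite /K.
  have hkp : 0 <= k * P0 by rewrite mulr_ge0 // ltW.
  have : be ^+ 2 * u ^+ 2 <= be ^+ 2 * u by rewrite ler_wpM2l ?sqr_ge0 // expr2 ler_piMr // ltW.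
  nra.
lra.
Qed.

Definition bad {R : realType} (k d l q : R) (A : 'M[R]_3) :=
  k * fnorm (A - l%:M) `^ q + d * Gfun l A < 0.

Lemma ediv_le {R : realType} (a g : R) (M : \bar R) : 0 <= a -> 0 < g ->
  (g%:E <= M)%E -> (a%:E / M <= (a / g)%:E)%E.
Proof.
move=> ha hg; case: M => [x| |] //=.
- rewrite lee_fin => hx.
  have hx0 : 0 < x by apply: lt_le_trans hx.
  rewrite inver gt_eqF //= -EFinM lee_fin.
  by apply: ler_wpM2l => //; rewrite lef_pV2.
- by move=> _; rewrite invey mule0 lee_fin divr_ge0 // ltW.
Qed.

Lemma powq2 {R : realType} (r q : R) : 0 < r -> r `^ (q - 2) * r ^+ 2 = r `^ q.
Proof.
move=> hr; rewrite -powR_mulrn ?ltW // -powRD; first by congr (_ `^ _); ring.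
by apply/implyP => _; rewrite gt_eqF.
Qed.

Lemma powq3 {R : realType} (r q : R) : 0 < r -> r `^ (q - 3) * r ^+ 3 = r `^ q.
Proof.
move=> hr; rewrite -powR_mulrn ?ltW // -powRD; first by congr (_ `^ _); ring.
by apply/implyP => _; rewrite gt_eqF.
Qed.

Lemma contra_bad {R : realType} (l q k d : R) (A B : 'M[R]_3) :
  2 < q < 3 -> 0 < k -> 0 < d ->
  ((d)%:E <=
     ereal_inf [set (k%:E *
                     maxe ((c0 `^ (q - 2))%R%:E / M2 l c0)
                          ((c0 `^ (q - 3))%R%:E / M3 l c0))%E
               | c0 in [set c0 : R | (0 < c0)%R]])%E ->
  bad k d l q A -> bad k d l q B -> 0 < fnorm (A - l%:M) < fnorm (B - l%:M) -> False.
Proof.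
move=> /andP[hq2 hq3] hk hd Hinf hA hB /andP[hrA hAB].
set rA := fnorm (A - l%:M) in hA hrA hAB *.
set rB := fnorm (B - l%:M) in hB hAB *.
have hrB : 0 < rB by apply: lt_trans hAB.
have H2 : (ereal_inf [set (k%:E *
                     maxe ((c0 `^ (q - 2))%R%:E / M2 l c0)
                          ((c0 `^ (q - 3))%R%:E / M3 l c0))%E
               | c0 in [set c0 : R | (0 < c0)%R]] <=
      k%:E * maxe ((rB `^ (q - 2))%R%:E / M2 l rB) ((rB `^ (q - 3))%R%:E / M3 l rB))%E.
  by apply: ereal_inf_lbound; exists rB.
have hGB : d * `|Gfun l B| > k * rB `^ q.
  have := powR_ge0 rB q; move: hB; rewrite /bad -/rB => hB hp.
  have hG : Gfun l B < 0 by nra.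
  rewrite ltr0_norm //; lra.
have hGA : d * `|Gfun l A| > k * rA `^ q.
  have := powR_ge0 rA q; move: hA; rewrite /bad -/rA => hA hp.
  have hG : Gfun l A < 0 by nra.
  rewrite ltr0_norm //; lra.
have GBp : 0 < `|Gfun l B|.
  have h0 : 0 <= k * rB `^ q by rewrite mulr_ge0 ?powR_ge0 ?ltW.
  by rewrite -(pmulr_rgt0 _ hd); apply: le_lt_trans hGB.
have GAp : 0 < `|Gfun l A|.
  have h0 : 0 <= k * rA `^ q by rewrite mulr_ge0 ?powR_ge0 ?ltW.
  by rewrite -(pmulr_rgt0 _ hd); apply: le_lt_trans hGA.
set gB := `|Gfun l B| / rB ^+ 2.
have gBp : 0 < gB by rewrite divr_gt0 // exprn_gt0.
have M2ge : ((gB)%:E <= M2 l rB)%E.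
  by apply: ereal_sup_ubound; exists B => //=.
have T1le := ediv_le (powR_ge0 rB (q - 2)) gBp M2ge.
have T1lt : rB `^ (q - 2) / gB < d / k.
  have E1 : rB `^ (q - 2) / gB = rB `^ q / `|Gfun l B|.
    by rewrite /gB invf_div mulrA powq2.
  rewrite E1 ltr_pdivrMr // mulrAC ltr_pdivlMr // mulrC.
  by [].
set gA := `|Gfun l A| / rA ^+ 3.
have gAp : 0 < gA by rewrite divr_gt0 // exprn_gt0.
have M3ge : ((gA)%:E <= M3 l rB)%E.
  by apply: ereal_sup_ubound; exists A => //=; rewrite hrA hAB.
have T2le := ediv_le (powR_ge0 rB (q - 3)) gAp M3ge.
have hpw : rB `^ (q - 3) < rA `^ (q - 3).
  have h1 : rA `^ (3 - q) < rB `^ (3 - q).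
    by apply: gt0_ltr_powR; rewrite ?subr_gt0 // nnegrE ltW.
  have E : forall r : R, r `^ (q - 3) = (r `^ (3 - q))^-1 by move=> r; rewrite -powRN opprB.
  by rewrite !E ltf_pV2 ?posrE ?powR_gt0.
have T2lt : rB `^ (q - 3) / gA < d / k.
  have E1 : rB `^ (q - 3) / gA = rB `^ (q - 3) * rA ^+ 3 / `|Gfun l A|.
    by rewrite /gA invf_div mulrA.
  have E2 : rA `^ (q - 3) * rA ^+ 3 / `|Gfun l A| = rA `^ q / `|Gfun l A|.
    by rewrite powq3.
  apply: (@lt_trans _ _ (rA `^ (q - 3) * rA ^+ 3 / `|Gfun l A|)).
    by rewrite E1 ltr_pM2r ?invr_gt0 // ltr_pM2r // exprn_gt0.
  rewrite E2 ltr_pdivrMr // mulrAC ltr_pdivlMr // mulrC.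
  by [].
have Hmax : (maxe ((rB `^ (q - 2))%R%:E / M2 l rB) ((rB `^ (q - 3))%R%:E / M3 l rB) < (d / k)%:E)%E.
  rewrite gt_max; apply/andP; split.
  - by apply: (le_lt_trans T1le); rewrite lte_fin.
  - by apply: (le_lt_trans T2le); rewrite lte_fin.
have Ed : (d%:E = k%:E * (d / k)%:E)%E by rewrite -EFinM mulrC divfK ?gt_eqF.
have Hk : (k%:E * maxe ((rB `^ (q - 2))%R%:E / M2 l rB) ((rB `^ (q - 3))%R%:E / M3 l rB) < d%:E)%E.
  by rewrite Ed lte_pmul2l.
by have := le_trans Hinf H2; rewrite leNgt Hk.
Qed.

Lemma mx_ent_eq {R : realType} (A B : 'M[R]_3) :
  (forall i j, (i < 3)%N -> (j < 3)%N -> ent A i j = ent B i j) -> A = B.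
Proof. move=> H; apply/matrixP => i j; rewrite [LHS]entE [RHS]entE; apply: H; exact: ltn_ord. Qed.

Lemma ent0 {R : realType} i j : ent (0 : 'M[R]_3) i j = 0.
Proof. by rewrite /ent mxE. Qed.

Lemma fnorm0 {R : realType} (M : 'M[R]_3) : fnorm M = 0 -> M = 0.
Proof.
move=> h; have := fnorm2 M; rewrite h expr0n /= => hs.
have q00 := sqr_ge0 (ent M 0 0); have q01 := sqr_ge0 (ent M 0 1); have q02 := sqr_ge0 (ent M 0 2).
have q10 := sqr_ge0 (ent M 1 0); have q11 := sqr_ge0 (ent M 1 1); have q12 := sqr_ge0 (ent M 1 2).
have q20 := sqr_ge0 (ent M 2 0); have q21 := sqr_ge0 (ent M 2 1); have q22 := sqr_ge0 (ent M 2 2).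
apply: mx_ent_eq => i j hi hj; rewrite ent0; apply/eqP; rewrite -sqrf_eq0; apply/eqP.
move: hi hj; case: i => [|[|[|//]]] _; case: j => [|[|[|//]]] _; lra.
Qed.

Section Main.
Context {R : realType} (k d l q : R).
Hypothesis hk : 0 < k.
Hypothesis hd : 0 < d.
Hypothesis hl : 0 < l.
Hypothesis hq : 2 < q < 3.
Hypothesis Hinf : ((d)%:E <=
     ereal_inf [set (k%:E *
                     maxe ((c0 `^ (q - 2))%R%:E / M2 l c0)
                          ((c0 `^ (q - 3))%R%:E / M3 l c0))%E
               | c0 in [set c0 : R | (0 < c0)%R]])%E.

Lemma bad_pos (A : 'M[R]_3) : bad k d l q A -> 0 < fnorm (A - l%:M).
Proof.
move=> hA; rewrite lt_def sqrtr_ge0 andbT; apply/eqP => h0.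
have : A = l%:M by apply/eqP; rewrite -subr_eq0; apply/eqP; apply: fnorm0.
move=> hAl; move: hA; rewrite /bad hAl G_scalar ?ltW // mulr0 addr0.
by rewrite ltNge mulr_ge0 ?powR_ge0 ?ltW.
Qed.

Lemma two_bad (A B : 'M[R]_3) : bad k d l q A -> bad k d l q B ->
  fnorm (A - l%:M) != fnorm (B - l%:M) -> False.
Proof.
move=> hA hB; rewrite neq_lt => /orP[h|h].
- by apply: (contra_bad hq hk hd Hinf hA hB); rewrite bad_pos.
- by apply: (contra_bad hq hk hd Hinf hB hA); rewrite bad_pos.
Qed.

Lemma rot_bad p (A : 'M[R]_3) : (p < 3)%N -> bad k d l q A ->
  exists u, 0 < u /\ forall e, (e = u \/ e = - u) -> bad k d l q (A *m Rot p e).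
Proof.
move=> hp hA.
have hq0 : 0 < q by case/andP: hq => h _; lra.
have hq4 : q <= 4 by case/andP: hq => _ h; lra.
have [u [hu Hu]] := pert (tX p A - l * ty2 p A) (tY p A - l * ty1 p A) (ty1 p A) (ty2 p A)
   hk hd hl hq0 hq4 (bad_pos hA) hA.
exists u; split => // e he.
have EG : Gfun l (A *m Rot p e) = Gfun l A -
   ((tX p A - l * ty2 p A) * (cs e - 1) + (tY p A - l * ty1 p A) * sn e).
  by rewrite /Gfun /Nfun Pfun_rot ?rot_orth // trc_rot // tr_rot //; ring.
rewrite /bad EG; apply: Hu => //; first exact: sqrtr_ge0.
by rewrite fn_rot.
Qed.

Lemma nondeg p (A : 'M[R]_3) : (p < 3)%N -> bad k d l q A ->
  (ty1 p A != 0) || (ty2 p A != 0) -> False.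
Proof.
move=> hp hA hnz.
have [u [hu Hu]] := rot_bad hp hA.
have key : forall e, (e = u \/ e = - u) ->
    ty2 p A * (cs e - 1) + ty1 p A * sn e != 0 -> False.
  move=> e he hne; apply: (two_bad hA (Hu e he)).
  apply/negP => /eqP hEq.
  have := fn_rot e l A hp; rewrite -hEq => h.
  have : 2 * l * (ty2 p A * (cs e - 1) + ty1 p A * sn e) = 0 by lra.
  by apply/eqP; rewrite !mulf_neq0 // gt_eqF.
have [h0|h0] := eqVneq (ty2 p A * (cs u - 1) + ty1 p A * sn u) 0; last first.
  by apply: (key u) => //; left.
apply: (key (- u)); first by right.
rewrite csN snN; apply/negP => /eqP h1.
have hs := sn_pos hu; have hc := cs_neg hu.
have e1 : ty1 p A * sn u = 0 by lra.
have e2 : ty2 p A * (cs u - 1) = 0 by lra.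
move: e1 e2 => /eqP; rewrite mulf_eq0 (gt_eqF hs) orbF => /eqP e1 /eqP.
rewrite mulf_eq0 (lt_eqF hc) orbF => /eqP e2.
by move: hnz; rewrite e1 e2 eqxx.
Qed.

Lemma degen (A : 'M[R]_3) : bad k d l q A ->
  (forall p, (p < 3)%N -> ty1 p A = 0 /\ ty2 p A = 0) -> False.
Proof.
move=> hA H.
have [h01 h0] := H 0%N isT; have [h02 h1] := H 1%N isT; have [h12 h2] := H 2%N isT.
rewrite /ty1 /ty2 in h01 h0 h02 h1 h12 h2.
have a00 : ent A 0 0 = 0 by lra.
have a11 : ent A 1 1 = 0 by lra.
have a22 : ent A 2 2 = 0 by lra.
have [n01|z01] := eqVneq (ent A 0 1) 0; last first.
  have [u [hu Hu]] := rot_bad (isT : (0 < 3)%N) hA.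
  apply: (nondeg (p := 1) isT (Hu u (or_introl erefl))).
  rewrite /ty2 !entM !entR //= /rotf /= a00 a22; apply/orP; right.
  apply/negP => /eqP hE.
  have : ent A 0 1 * sn u = 0 by rewrite -hE; ring.
  by apply/eqP; rewrite mulf_neq0 // gt_eqF // sn_pos.
have [n02|z02] := eqVneq (ent A 0 2) 0; last first.
  have [u [hu Hu]] := rot_bad (isT : (1 < 3)%N) hA.
  apply: (nondeg (p := 0) isT (Hu u (or_introl erefl))).
  rewrite /ty2 !entM !entR //= /rotf /= a00 a11; apply/orP; right.
  apply/negP => /eqP hE.
  have : ent A 0 2 * sn u = 0 by rewrite -hE; ring.
  by apply/eqP; rewrite mulf_neq0 // gt_eqF // sn_pos.
have [n12|z12] := eqVneq (ent A 1 2) 0; last first.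
  have [u [hu Hu]] := rot_bad (isT : (2 < 3)%N) hA.
  apply: (nondeg (p := 0) isT (Hu u (or_introl erefl))).
  rewrite /ty2 !entM !entR //= /rotf /= a00 a11; apply/orP; right.
  apply/negP => /eqP hE.
  have : ent A 1 2 * sn u = 0 by rewrite -hE; ring.
  by apply/eqP; rewrite mulf_neq0 // gt_eqF // sn_pos.
have A0 : A = (0 : R)%:M.
  apply: mx_ent_eq => i j hi hj; rewrite entS //.
  move: hi hj; case: i => [|[|[|//]]] _; case: j => [|[|[|//]]] _ //=; lra.
move: hA; rewrite /bad A0 G_scalar // mulr0 addr0.
by rewrite ltNge mulr_ge0 ?powR_ge0 ?ltW.
Qed.

End Main.

Unset Implicit Arguments.
Set Strict Implicit.

Theorem lemma3p2 (R : realType) (lam q kappa : R) (h : R -> \bar R) :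
  0 < lam ->
  2 < q < 3 ->
  2 `^ (2 - q) <= kappa <= q * 2 `^ (1 - q) ->
  (* h : R -> [0, +oo] *)
  (forall t : R, (0 <= h t)%E) ->
  (* h convex *)
  (forall x y t : R, 0 <= t <= 1 ->
     (h (t * x + (1 - t) * y)%R <= t%:E * h x + (1 - t)%:E * h y)%E) ->
  (* h is (finite and) C^1 on (0, +oo) *)
  (forall t : R, 0 < t -> h t \is a fin_num) ->
  (forall t : R, 0 < t -> derivable (fine \o h) t 1) ->
  (forall t : R, 0 < t -> {for t, continuous (derive1 (fine \o h))}) ->
  (* lim_{t -> 0+} h t = +oo *)
  h x @[x --> 0^'+] --> +oo%E ->
  (* liminf_{t -> oo} h(t)/t > 0 *)
  (0 < limf_einf (fun t : R => h t * (t^-1)%:E) (pinfty_nbhs R))%E ->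
  (* h = +oo on (-oo, 0] *)
  (forall t : R, t <= 0 -> h t = +oo%E) ->
  0 <= derive1 (fine \o h) (lam ^+ 3) ->
  ((lam * derive1 (fine \o h) (lam ^+ 3))%:E <=
     ereal_inf [set ((kappa / 2)%R%:E *
                     maxe ((c0 `^ (q - 2))%R%:E / M2 lam c0)
                          ((c0 `^ (q - 3))%R%:E / M3 lam c0))%E
               | c0 in [set c0 : R | (0 < c0)%R]])%E ->
  forall A : 'M[R]_3,
    0 <= kappa / 2 * fnorm (A - lam%:M) `^ q
         + lam * derive1 (fine \o h) (lam ^+ 3) * Gfun lam A.
Proof.
move=> hl hq /andP[hk1 _] _ _ _ _ _ _ _ _ hder Hinf A.
set d := lam * derive1 (fine \o h) (lam ^+ 3) in Hinf *.
set k := kappa / 2 in Hinf *.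
have hk : 0 < k by rewrite /k divr_gt0 // (lt_le_trans _ hk1) // powR_gt0.
have hd0 : 0 <= d by rewrite /d mulr_ge0 // ltW.
rewrite leNgt; apply/negP => hneg.
have [hd00|hdp] := eqVneq d 0.
  move: hneg; rewrite hd00 mul0r addr0 ltNge mulr_ge0 ?powR_ge0 //; exact: ltW.
have hd : 0 < d by rewrite lt_def hdp hd0.
have hA : bad k d lam q A by [].
have [H0|H0] := boolP ((ty1 0 A != 0) || (ty2 0 A != 0)).
  exact: (nondeg hk hd hl hq Hinf (isT : (0 < 3)%N) hA H0).
have [H1|H1] := boolP ((ty1 1 A != 0) || (ty2 1 A != 0)).
  exact: (nondeg hk hd hl hq Hinf (isT : (1 < 3)%N) hA H1).
have [H2|H2] := boolP ((ty1 2 A != 0) || (ty2 2 A != 0)).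
  exact: (nondeg hk hd hl hq Hinf (isT : (2 < 3)%N) hA H2).
apply: (degen hk hd hl hq Hinf hA) => p hp.
move: H0 H1 H2; rewrite !negb_or !negbK.
move=> /andP[/eqP a1 /eqP a2] /andP[/eqP b1 /eqP b2] /andP[/eqP c1 /eqP c2].
by case: p hp => [|[|[|//]]] _; split.
Qed.
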